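(* Let $n\ge1$ and $A$ a nonempty finite set. A graph $g\in\mathscr G_n(A)$ lies in the image of $\mu\colon\mathscr M_n(A)\to\mathscr G_n(A)$ if and only if for every directed path $a_0\to a_1\to\dots\to a_k$ in $g$ with $k\ge1$ there exists an index $0\le i<k$ such that all edges $a_p\to a_q$ with $p\le i<q$ have the same weight.
   Context: $\mathscr M_n(A)$: equivalence classes of planar rooted trees with leaf set $A$ and vertices labelled by $1,\dots,n$, modulo: all stumps equivalent; non-root stumps removable; edges between equally labelled vertices contractible; unary vertices removable. $\mathscr G_n(A)$ is the set of acyclic complete directed graphs on $A$ with weights in $\{1,\dots,n\}$ (each two-element subset carries exactly one directed weighted edge, and the directions form a linear order). $\mu(T)$ is the graph with edge $a\to b$ iff $a$ precedes $b$ in the planar order of the leaves of $T$, weighted by the label of the lowest vertex on the path from $a$ to $b$ in $T$. *)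

(* Defs.v *)
From mathcomp Require Import all_boot.
Set Implicit Arguments. Unset Strict Implicit. Unset Printing Implicit Defensive.

(* Planar rooted trees: leaves carry elements of A; every (non-leaf) vertex
   carries a label (intended to lie in {1,...,n}); the children of a vertex
   are ordered (planar structure). *)
Inductive ptree (A : Type) : Type :=
| Leaf of A
| Node of nat & seq (ptree A).

Arguments Leaf {A} _.
Arguments Node {A} _ _.

Section Trees.
Variable A : finType.

Fixpoint leaves (t : ptree A) : seq A :=
  match t with
  | Leaf a => [:: a]
  | Node _ ts => flatten (map leaves ts)
  end.

Fixpoint labels_ok (n : nat) (t : ptree A) : bool :=
  match t with
  | Leaf _ => true
  | Node l ts => (1 <= l <= n) && all (labels_ok n) ts
  end.

Definition is_tree (n : nat) (t : ptree A) : bool :=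
  labels_ok n t && uniq (leaves t) && perm_eq (leaves t) (enum A).

Fixpoint lca_label (t : ptree A) (a b : A) : nat :=
  match t with
  | Leaf _ => 0
  | Node l ts =>
      (fix go (us : seq (ptree A)) : nat :=
         match us with
         | [::] => l
         | u :: us' =>
             if (a \in leaves u) && (b \in leaves u) then lca_label u a b
             else go us'
         end) ts
  end.

(* A weighted directed graph on A: g a b = Some k iff there is an edge a -> b
   of weight k, and g a b = None iff there is no edge a -> b. *)
Definition wgraph := A -> A -> option nat.

(* membership in G_n(A): acyclic complete directed graph with weights in 1..n *)
Definition in_G (n : nat) (g : wgraph) : Prop :=
  [/\ forall a, g a a = None,
      forall a b, a != b -> (g a b != None) (+) (g b a != None),
      forall a b k, g a b = Some k -> 1 <= k <= n
    & forall a b c, g a b != None -> g b c != None -> g a c != None].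

Definition mu (t : ptree A) : wgraph :=
  fun a b =>
    if a == b then None
    else if index a (leaves t) < index b (leaves t)
         then Some (lca_label t a b) else None.

Definition in_image_mu (n : nat) (g : wgraph) : Prop :=
  exists t : ptree A, is_tree n t /\ forall a b, mu t a b = g a b.

Definition path_condition (g : wgraph) : Prop :=
  forall (k : nat) (p : nat -> A), 1 <= k ->
    (forall j, j < k -> g (p j) (p j.+1) != None) ->
    exists2 i, i < k &
      exists c, forall x y, x <= i -> i < y -> y <= k -> g (p x) (p y) = Some c.

End Trees.

(* Main.v *)
Require Import Defs.
From mathcomp Require Import all_boot zify.
Set Implicit Arguments. Unset Strict Implicit. Unset Printing Implicit Defensive.

Section S.
Variable A : finType.

Fixpoint ptree_ind2 (P : ptree A -> Prop) (HL : forall a, P (Leaf a))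
  (HN : forall l ts, (forall u, List.In u ts -> P u) -> P (Node l ts)) t {struct t} : P t :=
  match t with
  | Leaf a => HL a
  | Node l ts => HN l ts ((fix go (ts : seq (ptree A)) : forall u, List.In u ts -> P u :=
      match ts return forall u, List.In u ts -> P u with
      | [::] => fun u (H : False) => False_ind (P u) H
      | v :: vs => fun u H => match H with
          | or_introl E => @eq_ind (ptree A) v P (@ptree_ind2 P HL HN v) u E
          | or_intror H' => go vs u H' end
      end) ts)
  end.

Lemma lca_node l ts (a b : A) : lca_label (Node l ts) a b =
  if has (fun u => (a \in leaves u) && (b \in leaves u)) ts
  then lca_label (nth (Leaf a) ts (find (fun u => (a \in leaves u) && (b \in leaves u)) ts)) a b
  else l.
Proof.
elim: ts => [|u ts IH] //=.
by case: ifP => H /=; [done | exact IH].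
Qed.

Lemma split_seq (ts : seq (ptree A)) q : q < size (flatten (map (@leaves A) ts)) ->
  exists us u vs, ts = us ++ u :: vs /\
   size (flatten (map (@leaves A) us)) <= q < size (flatten (map (@leaves A) us)) + size (leaves u).
Proof.
elim: ts q => [|v ts IH] q //=. rewrite size_cat => Hq.
case: (ltnP q (size (leaves v))) => Hv.
  by exists [::], v, ts.
have [us [u [vs [-> H]]]] := IH (q - size (leaves v)) ltac:(lia).
exists (v :: us), u, vs; split => //=. rewrite size_cat. lia.
Qed.

Lemma mono (q : nat -> nat) k : (forall j, j < k -> q j < q j.+1) ->
  forall x y, x <= y -> y <= k -> q x <= q y.
Proof.
move=> H x y; elim: y => [|y IH] Hxy Hy.
  by have ->: x = 0 by lia.
rewrite leq_eqVlt in Hxy; case/orP: Hxy => [/eqP->//|Hxy].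
have := IH Hxy (ltnW Hy). have := H y Hy. lia.
Qed.

Lemma smono (q : nat -> nat) k : (forall j, j < k -> q j < q j.+1) ->
  forall x y, x < y -> y <= k -> q x < q y.
Proof.
move=> H x [|y] Hxy Hy //.
have := mono H (x:=x) (y:=y) ltac:(lia) ltac:(lia). have := H y Hy. lia.
Qed.

Lemma crossing (q : nat -> nat) T k : q 0 < T -> T <= q k ->
  exists2 i, i < k & q i < T <= q i.+1.
Proof.
elim: k => [|k IH] H0 Hk; first lia.
case: (leqP T (q k)) => Hk'.
  by have [i Hi Hi'] := IH H0 Hk'; exists i => //; lia.
by exists k => //; rewrite Hk' Hk.
Qed.

Lemma notin_has (P : pred (ptree A)) us : (forall w, List.In w us -> ~~ P w) -> ~~ has P us.
Proof.
elim: us => [|v us IH] //= H. rewrite negb_or H /=; [|by left].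
apply: IH => w Hw. apply: H. by right.
Qed.

Lemma in_flat (w : ptree A) us a : List.In w us -> a \in leaves w -> a \in flatten (map (@leaves A) us).
Proof.
elim: us => [|v us IH] //= [->|Hw] Ha; rewrite mem_cat ?Ha //.
by rewrite IH ?orbT.
Qed.

Ltac set_printing := match goal with |- ?g => idtac g end.
Ltac slia := repeat (match goal with
 | H : context [size ?s] |- _ => let a := fresh "sz" in set a := size s in *
 | |- context [size ?s] => let a := fresh "sz" in set a := size s in *
 end); lia.

Lemma tree_cond t (x0 : A) : uniq (leaves t) -> forall k (q : nat -> nat), 1 <= k ->
  (forall j, j < k -> q j < q j.+1) -> q k < size (leaves t) ->
  exists2 i, i < k & exists c, forall x y, x <= i -> i < y -> y <= k ->
    lca_label t (nth x0 (leaves t) (q x)) (nth x0 (leaves t) (q y)) = c.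
Proof.
elim/ptree_ind2: t => [a|l ts IH] Hu k q Hk Hq Hlt.
  move: Hlt => /= Hlt.
  have := smono Hq (x:=0) (y:=k) Hk (leqnn k). slia.
have Hm := mono Hq.
have [us [u [vs [Ets Hb]]]] := @split_seq ts (q 0) (leq_ltn_trans (Hm 0 k (leq0n _) (leqnn _)) Hlt).
set X := flatten (map (@leaves A) us) in Hb *; set Y := leaves u in Hb *.
set Z := flatten (map (@leaves A) vs).
have EL : leaves (Node l ts) = X ++ Y ++ Z by rewrite /= Ets map_cat flatten_cat.
rewrite EL in Hu Hlt *.
move: (Hu); rewrite cat_uniq => /and3P [_ HXYZ HYZ].
move: (HYZ); rewrite cat_uniq => /and3P [HY HYZ' _].
have dXY : forall a, a \in Y -> a \notin X.
  move=> a Ha; apply/negP => Hx; move/negP: HXYZ; apply; apply/hasP; exists a => //.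
  by rewrite mem_cat Ha.
have dYZ : forall a, a \in Y -> a \notin Z.
  move=> a Ha; apply/negP => Hz; move/negP: HYZ'; apply; apply/hasP; by exists a.
have nthY : forall r, size X <= r < size X + size Y -> nth x0 (X ++ Y ++ Z) r = nth x0 Y (r - size X).
  move=> r Hr; rewrite nth_cat ifN; last slia. rewrite nth_cat ifT //; slia.
have nthZ : forall r, size X + size Y <= r < size (X ++ Y ++ Z) -> nth x0 (X ++ Y ++ Z) r \in Z.
  move=> r Hr; rewrite nth_cat ifN; last slia. rewrite nth_cat ifN; last slia.
  apply: mem_nth. rewrite !size_cat in Hr. move: Hr; set a1 := size X; set a2 := size Y; set a3 := size Z; slia.
have inY : forall r, size X <= r < size X + size Y -> nth x0 (X ++ Y ++ Z) r \in Y.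
  move=> r Hr; rewrite nthY // mem_nth //; move: Hr; set a1 := size X; set a2 := size Y; slia.
have Pus : forall a b, a \in Y -> ~~ has (fun u => (a \in leaves u) && (b \in leaves u)) us.
  move=> a b Ha; apply: notin_has => w Hw; apply/negP => /andP [Hw1 _].
  by move/negP: (dXY a Ha); apply; apply: in_flat Hw Hw1.
case: (ltnP (q k) (size X + size Y)) => Hqk.
- have Hin : List.In u ts by rewrite Ets; apply List.in_or_app; right; left.
  have Hq0 : forall j, j <= k -> size X <= q j < size X + size Y.
    move=> j Hj; have := Hm 0 j (leq0n _) Hj; have := Hm j k Hj (leqnn _); slia.
  have [i Hi [c Hc]] := IH u Hin HY k (fun j => q j - size X) Hk
    ltac:(move=> j Hj; have := Hq0 j (ltnW Hj); have := Hq0 j.+1 Hj; have := Hq j Hj; slia)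
    ltac:(have := Hq0 k (leqnn _); rewrite /Y; slia).
  exists i => //; exists c => x y Hx Hy Hyk.
  rewrite !nthY ?Hq0 //; try slia.
  rewrite lca_node Ets has_cat find_cat.
  have Ha : nth x0 Y (q x - size X) \in Y by apply: mem_nth; have := Hq0 x ltac:(slia); case/andP => h1 h2; rewrite ltn_subLR.
  have Hb' : nth x0 Y (q y - size X) \in Y by apply: mem_nth; have := Hq0 y ltac:(slia); case/andP => h1 h2; rewrite ltn_subLR.
  rewrite (negbTE (Pus _ _ Ha)) /= Ha Hb' /= addn0 nth_cat ltnn subnn /=.
  exact: Hc.
- have [i Hi /andP [Hi1 Hi2]] := crossing (T := size X + size Y) (q:=q) (k:=k) ltac:(slia) Hqk.
  exists i => //; exists l => x y Hx Hy Hyk.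
  have Ha : nth x0 (X ++ Y ++ Z) (q x) \in Y.
    apply: inY; have := Hm 0 x (leq0n _) ltac:(slia); have := Hm x i Hx ltac:(slia); slia.
  have Hb' : nth x0 (X ++ Y ++ Z) (q y) \in Z.
    apply: nthZ; have := Hm i.+1 y Hy Hyk; have := Hm y k Hyk (leqnn _); slia.
  rewrite lca_node Ets has_cat (negbTE (Pus _ _ Ha)) /=.
  have nbY : nth x0 (X ++ Y ++ Z) (q y) \notin Y.
    by apply/negP => /dYZ; rewrite Hb'.
  rewrite (negbTE nbY) andbF /=.
  have : ~~ has (fun u => (nth x0 (X ++ Y ++ Z) (q x) \in leaves u) && (nth x0 (X ++ Y ++ Z) (q y) \in leaves u)) vs.
    apply: notin_has => w Hw; apply/negP => /andP [Hw1 _].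
    by move/negP: (dYZ _ Ha); apply; apply: in_flat Hw Hw1.
  by move/negbTE => ->.
Qed.

Lemma mem_take_nth (x0 : A) (u : seq A) m x : x < m -> m <= size u -> nth x0 u x \in take m u.
Proof. move=> H1 H2; rewrite -(nth_take x0 H1) mem_nth // size_takel //. Qed.

Lemma mem_drop_nth (x0 : A) (u : seq A) m x : m <= x -> x < size u -> nth x0 u x \in drop m u.
Proof. move=> H1 H2; rewrite -(subnKC H1) -nth_drop mem_nth // size_drop. apply: ltn_sub2r => //; exact: leq_ltn_trans H1 H2. Qed.

Lemma take_drop_disj (u : seq A) m a : uniq u -> a \in take m u -> a \notin drop m u.
Proof.
rewrite -{1}(cat_take_drop m u) cat_uniq => /and3P [_ H _] Ha.
apply/negP => Hd; move/negP: H; apply; apply/hasP; by exists a.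
Qed.

Lemma build (n : nat) (g : wgraph A) (x0 : A) :
  (forall a b k, g a b = Some k -> 1 <= k <= n) -> path_condition g ->
  forall m (u : seq A), size u = m.+1 -> uniq u ->
  (forall x y, x < y -> y < size u -> g (nth x0 u x) (nth x0 u y) != None) ->
  exists t, [/\ labels_ok n t, leaves t = u &
    forall x y, x < y -> y < size u ->
      g (nth x0 u x) (nth x0 u y) = Some (lca_label t (nth x0 u x) (nth x0 u y))].
Proof.
move=> Hw Hpc. elim/ltn_ind => m IH u Hs Huq Hg.
case: m IH Hs => [|m] IH Hs.
  exists (Leaf (nth x0 u 0)); split => //.
    by case: u Hs {Huq Hg} => [|a [|]].
  move=> x y Hxy Hy; lia.
have [i Hi [c Hc]] := Hpc m.+1 (nth x0 u) isT
  (fun j Hj => Hg j j.+1 (ltnSn j) ltac:(rewrite Hs; lia)).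
have Hs1 : size (take i.+1 u) = i.+1 by rewrite size_takel // Hs; lia.
have Hs2 : size (drop i.+1 u) = (m - i).+1 by rewrite size_drop Hs; lia.
have [t1 [L1 E1 H1]] := IH i ltac:(lia) (take i.+1 u) Hs1 (take_uniq _ Huq)
  ltac:(move=> x y Hxy Hy; rewrite Hs1 in Hy; rewrite !nth_take //; try lia; apply: Hg => //; lia).
have [t2 [L2 E2 H2]] := IH (m - i) ltac:(lia) (drop i.+1 u) Hs2 (drop_uniq _ Huq)
  ltac:(move=> x y Hxy Hy; rewrite Hs2 in Hy; rewrite !nth_drop; apply: Hg; lia).
exists (Node c [:: t1; t2]); split.
- have := Hc 0 m.+1 (leq0n _) Hi (leqnn _) => /Hw Hcn /=; by rewrite Hcn L1 L2.
- by rewrite /= E1 E2 cats0 cat_take_drop.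
move=> x y Hxy Hy /=.
rewrite E1 E2.
case: (ltnP y i.+1) => Hyi.
  have Ha := mem_take_nth x0 (u:=u) (m:=i.+1) (x:=x) ltac:(lia) ltac:(lia).
  have Hb := mem_take_nth x0 (u:=u) (m:=i.+1) (x:=y) ltac:(lia) ltac:(lia).
  rewrite Ha Hb /=.
  have := H1 x y Hxy ltac:(lia). by rewrite !nth_take //; lia.
case: (ltnP x i.+1) => Hxi.
  have Ha := mem_take_nth x0 (u:=u) (m:=i.+1) (x:=x) ltac:(lia) ltac:(lia).
  have Hb := mem_drop_nth x0 (u:=u) (m:=i.+1) (x:=y) ltac:(lia) ltac:(lia).
  rewrite (negbTE (take_drop_disj Huq Ha)) /=.
  have : nth x0 u y \notin take i.+1 u.
    by apply/negP => /(take_drop_disj Huq); rewrite Hb.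
  move/negbTE => -> /=.
  rewrite andbF; apply: Hc; lia.
have Ha := mem_drop_nth x0 (u:=u) (m:=i.+1) (x:=x) ltac:(lia) ltac:(lia).
have Hb := mem_drop_nth x0 (u:=u) (m:=i.+1) (x:=y) ltac:(lia) ltac:(lia).
have : nth x0 u y \notin take i.+1 u.
  by apply/negP => /(take_drop_disj Huq); rewrite Hb.
move/negbTE => -> /=. rewrite andbF Ha Hb /=.
have := H2 (x - i.+1) (y - i.+1) ltac:(lia) ltac:(lia).
by rewrite !nth_drop !subnKC.
Qed.
End S.

Theorem mainTheorem17 (n : nat) (A : finType) (g : wgraph A) :
  1 <= n -> 0 < #|A| -> in_G n g ->
  (in_image_mu n g <-> path_condition g).
Proof.
move=> Hn HA [Hirr Hx Hw Ht].
case/card_gt0P: HA => x0 _.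
split.
- case=> t [/andP [/andP [Hl Hu] Hp] Hmu] k p Hk Hpath.
  have Hmem : forall a, a \in leaves t by move=> a; rewrite (perm_mem Hp) mem_enum.
  pose q j := index (p j) (leaves t).
  have Hq : forall j, j < k -> q j < q j.+1.
    move=> j Hj; have := Hpath j Hj; rewrite -Hmu /mu.
    case: ifP => // _; case: ifP => // H _; exact H.
  have [i Hi [c Hc]] := tree_cond x0 Hu Hk Hq ltac:(by rewrite /q index_mem).
  exists i => //; exists c => x y Hx1 Hy Hyk.
  have Hxy : q x < q y by apply: (smono Hq); lia.
  have Hne : p x != p y by apply/negP => /eqP E; move: Hxy; rewrite /q E ltnn.
  rewrite -Hmu /mu (negbTE Hne) ifT //.
  have := Hc x y Hx1 Hy Hyk. by rewrite /q !nth_index // => ->.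
- move=> Hpc.
  pose le := fun a b : A => (a == b) || (g a b != None).
  have le_total : total le.
    move=> a b; rewrite /le; case: (eqVneq a b) => [->|nab]; rewrite ?eqxx //=.
    move: (Hx a b nab).
    by case: (g a b) => [?|]; case: (g b a) => [?|].
  have le_trans : transitive le.
    move=> b a c; rewrite /le => /orP [/eqP->|H1] //.
    case/orP => [/eqP<-|H2]; first by rewrite H1 orbT.
    by rewrite (Ht _ _ _ H1 H2) orbT.
  set s := sort le (enum A).
  have Hs_uniq : uniq s by rewrite sort_uniq enum_uniq.
  have Hs_mem : forall a, a \in s by move=> a; rewrite mem_sort mem_enum.
  have Hsz : size s = #|A|.-1.+1.
    rewrite size_sort -cardE prednK //; apply/card_gt0P; by exists x0.
  have Hsorted : sorted le s by apply: sort_sorted.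
  have Hg : forall x y, x < y -> y < size s -> g (nth x0 s x) (nth x0 s y) != None.
    move=> x y Hxy Hy.
    have := sorted_ltn_nth le_trans x0 Hsorted x y.
    rewrite !inE => /(_ (ltn_trans Hxy Hy) Hy Hxy); rewrite /le (nth_uniq x0 (ltn_trans Hxy Hy) Hy Hs_uniq) (ltn_eqF Hxy) /=.
    by [].
  have [t [Hl Et Ht2]] := build (x0:=x0) Hw Hpc Hsz Hs_uniq Hg.
  exists t; split.
    by rewrite /is_tree Hl Et Hs_uniq /= perm_sort.
  move=> a b; rewrite /mu Et.
  case: (eqVneq a b) => [<-|nab]; first by rewrite Hirr.
  have Ha := Hs_mem a; have Hb := Hs_mem b.
  case: (ltngtP (index a s) (index b s)) => Hab.
  - have := Ht2 _ _ Hab; rewrite index_mem => /(_ Hb).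
    by rewrite !nth_index // => ->.
  - have := Hg _ _ Hab; rewrite index_mem => /(_ Ha).
    rewrite !nth_index //.
    move: (Hx a b nab). by case: (g a b) => [?|]; case: (g b a) => [?|].
  - by move/eqP: nab; case; rewrite -(nth_index x0 Ha) Hab nth_index.
Qed.
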